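(* Let $n\ge 3$ and $v\in A_n$. Then $$\mathrm{cyc}(v)=\begin{cases} n-\ell_{T(A_n)}(v) & \text{if } \ell_{T(A_n)}(v) \text{ is even},\\ n-\ell_{T(A_n)}(v)-1 & \text{if } \ell_{T(A_n)}(v)\text{ is odd}.\end{cases}$$
   Context: $A_n$ is the alternating group on $\{1,\dots,n\}$, $T(A_n)=\{(1\,2)(i\,j)\mid 1\le i<j\le n\}$, and $\ell_{T(A_n)}(v)=\min\{k\ge 0\mid v=t_1\cdots t_k,\ t_i\in T(A_n)\}$. $\mathrm{cyc}(v)$ is the number of cycles of $v$ in its disjoint cycle decomposition, fixed points counted. *)

(* Defs.v *)
From mathcomp Require Import all_boot all_order all_fingroup all_solvable.
From mathcomp Require Import alt.
Set Implicit Arguments. Unset Strict Implicit. Unset Printing Implicit Defensive.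
Local Open Scope group_scope.

(* Points 1..n are represented by 'I_n = {0,..,n-1}; the points 1 and 2 of
   the paper are the ordinals with values 0 and 1. *)

Definition TAn (n : nat) : {set {perm 'I_n}} :=
  [set t : {perm 'I_n} | [exists a : 'I_n, exists b : 'I_n, exists i : 'I_n,
     exists j : 'I_n, [&& nat_of_ord a == 0%N, nat_of_ord b == 1%N, (i < j)%N &
                          t == tperm a b * tperm i j]]].

Definition TAn_length_is (n : nat) (v : {perm 'I_n}) (k : nat) : Prop :=
  (exists s : seq {perm 'I_n},
      [/\ size s = k, all (fun t => t \in TAn n) s & v = \prod_(t <- s) t])
  /\ (forall s : seq {perm 'I_n},
      all (fun t => t \in TAn n) s -> v = \prod_(t <- s) t -> (k <= size s)%N).

(* number of cycles of v, fixed points included *)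
Definition cyc (n : nat) (v : {perm 'I_n}) : nat := #|porbits v|.

(* Main.v *)
Require Import Defs.
From mathcomp Require Import all_boot all_order all_fingroup all_solvable.
From mathcomp Require Import alt.
From mathcomp Require Import zify.
Set Implicit Arguments. Unset Strict Implicit. Unset Printing Implicit Defensive.
Local Open Scope group_scope.

Lemma cyc1 n : cyc (1 : {perm 'I_n}) = n.
Proof.
rewrite /cyc /porbits.
rewrite (eq_imset _ (g := fun x => [set x])); last first.
  by move=> x; rewrite [@porbit]unlock cycle1 imset_set1 /aperm perm1.
by rewrite card_imset ?card_ord //; exact: set1_inj.
Qed.

Lemma cyc_le n (s : {perm 'I_n}) : (cyc s <= n)%N.
Proof. rewrite /cyc /porbits; apply: leq_trans (leq_imset_card _ _) _; by rewrite card_ord. Qed.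

Lemma cyc_tpermT (T : finType) (s : {perm T}) x y :
  (#|porbits s| <= #|porbits (tperm x y * s)| + 1)%N.
Proof.
have := porbits_mul_tperm s x y; rewrite /=.
have [e|ne] := eqVneq x y.
  subst y; rewrite porbit_id /= -?muln2; lia.
case: (_ \notin _); rewrite /= -?muln2; lia.
Qed.

Lemma cyc_tperm n (s : {perm 'I_n}) x y : (cyc s <= cyc (tperm x y * s) + 1)%N.
Proof. exact: cyc_tpermT. Qed.

Lemma cyc_tperm_same n (s : {perm 'I_n}) x :
  s x != x -> cyc (tperm x (s x) * s) = (cyc s + 1)%N.
Proof.
move=> H; have := porbits_mul_tperm s x (s x); rewrite /cyc /=.
have -> : x \in porbit s (s x).
  by rewrite porbit_sym -{1}(expg1 s) mem_porbit.
rewrite eq_sym H /=; lia.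
Qed.

Lemma TAn_form n (t : {perm 'I_n}) : t \in TAn n ->
  exists a b i j : 'I_n, [/\ nat_of_ord a = 0%N, nat_of_ord b = 1%N &
    t = tperm a b * tperm i j].
Proof.
rewrite inE => /existsP[a /existsP[b /existsP[i /existsP[j /and4P[/eqP ha /eqP hb _ /eqP ->]]]]].
by exists a, b, i, j.
Qed.

Lemma lower n : forall k (s : seq {perm 'I_n}), (size s <= k)%N ->
  all (fun t => t \in TAn n) s ->
  (n <= cyc (\prod_(t <- s) t) + size s + odd (size s))%N.
Proof.
elim=> [|k IH] [|t1 s] //=.
- by move=> _ _; rewrite big_nil cyc1; lia.
- by move=> _ _; rewrite big_nil cyc1; lia.
move=> hs /andP[h1 hall].
case: s hs hall => [|t2 s] hs hall.
  rewrite big_cons big_nil mulg1 /=.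
  have [a [b [i [j [_ _ ->]]]]] := TAn_form h1.
  have := cyc_tperm (tperm i j) a b.
  have := cyc_tperm 1 i j; rewrite cyc1 mulg1 /= => e1 e2.
  exact: (leq_trans e1 (leq_add e2 (leqnn 1))).
move: hall => /= /andP[h2 hall].
have := IH s; rewrite /=; move=> /(_ _ hall) IHs.
have {IHs} IHs := IHs ltac:(move: hs => /=; lia).
have [a [b [i [j [ha hb ->]]]]] := TAn_form h1.
have [a' [b' [i' [j' [ha' hb' ->]]]]] := TAn_form h2.
have ea : a' = a by apply: val_inj; rewrite /= ha ha'.
have eb : b' = b by apply: val_inj; rewrite /= hb hb'.
subst a' b'.
rewrite !big_cons.
have -> : tperm a b * tperm i j * (tperm a b * tperm i' j' * \prod_(t <- s) t)
   = tperm (tperm a b i) (tperm a b j) * (tperm i' j' * \prod_(t <- s) t).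
  rewrite -tpermJ /conjg tpermV !mulgA //.
set P := \prod_(t <- s) t.
have := cyc_tperm (tperm i' j' * P) (tperm a b i) (tperm a b j).
have := cyc_tperm P i' j'.
rewrite /= negbK; move: IHs; rewrite -/P.
move: (cyc P) (cyc (tperm i' j' * P)) (cyc (tperm (tperm a b i) (tperm a b j) * (tperm i' j' * P))) (size s) (odd (size s)) => c0 c1 c2 z [] /=; lia.
Qed.

Lemma ex_tr n : forall d (v : {perm 'I_n}), (n - cyc v = d)%N ->
  exists ts : seq ('I_n * 'I_n), [/\ size ts = d, all dpair ts &
     v = \prod_(p <- ts) tperm p.1 p.2].
Proof.
elim=> [|d IH] v hd.
  exists [::]; split => //; rewrite big_nil.
  apply/permP => x; rewrite perm1; apply/eqP/negPn/negP => hx.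
  have := cyc_tperm_same hx; have := cyc_le (tperm x (v x) * v); lia.
have hv : exists x, v x != x.
  case: (pickP (fun x => v x != x)) => [x hx|H]; first by exists x.
  have v1 : v = 1 by apply/permP => x; rewrite perm1; apply/eqP/negPn; rewrite H.
  by move: hd; rewrite v1 cyc1 subnn.
case: hv => x hx.
have := cyc_tperm_same hx; have := cyc_le (tperm x (v x) * v) => h1 h2.
have [ts [h3 h4 h5]] := IH (tperm x (v x) * v) ltac:(lia).
exists ((x, v x) :: ts); split => /=.
- by rewrite h3.
- by rewrite h4 andbT /dpair /= eq_sym.
- by rewrite big_cons -h5 tpermKg.
Qed.

Section Pairing.
Variable n : nat.
Hypothesis hn : (1 < n)%N.
Definition o0 : 'I_n := Ordinal (ltnW hn).
Definition o1 : 'I_n := Ordinal hn.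
Definition mkT (x y : 'I_n) := tperm o0 o1 * tperm x y.

Lemma mkT_in x y : x != y -> mkT x y \in TAn n.
Proof.
move=> hxy; rewrite inE; apply/existsP; exists o0; apply/existsP; exists o1.
have [lt|ge] := ltnP x y.
  apply/existsP; exists x; apply/existsP; exists y; by rewrite lt /mkT !eqxx.
apply/existsP; exists y; apply/existsP; exists x.
have lt : (y < x)%N.
  rewrite ltn_neqAle ge andbT; apply/negP => /eqP E.
  by move/eqP: hxy; apply; apply: val_inj.
by rewrite lt /mkT (tpermC y x) /= !eqxx.
Qed.

Lemma pairing : forall k (ts : seq ('I_n * 'I_n)), size ts = k.*2 -> all dpair ts ->
  exists s : seq {perm 'I_n}, [/\ size s = size ts, all (fun t => t \in TAn n) s &
     \prod_(p <- ts) tperm p.1 p.2 = \prod_(t <- s) t].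
Proof.
elim=> [|k IH] [|[a b] [|[c d] ts]] //=.
- by move=> _ _; exists [::]; rewrite !big_nil.
move=> [] hs /and3P[hab hcd hall].
have [s [h1 h2 h3]] := IH ts hs hall.
set sg := tperm o0 o1.
exists (mkT (sg a) (sg b) :: mkT c d :: s); split => /=.
- by rewrite h1.
- rewrite h2 mkT_in ?mkT_in //.
  by rewrite (inj_eq perm_inj).
rewrite !big_cons h3 /mkT !mulgA; congr (_ * _ * _).
by rewrite -tpermJ /conjg tpermV -/sg !mulgA tperm2 mul1g -mulgA tperm2 mulg1.
Qed.
End Pairing.

Theorem theorem6p3 (n : nat) (hn : (3 <= n)%N) (v : {perm 'I_n})
    (hv : v \in ('Alt_('I_n))%g) :
  exists k : nat, TAn_length_is v k /\
    cyc v = (if odd k then n - k - 1 else n - k)%N.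
Proof.
have hn1 : (1 < n)%N by lia.
have [ts [h1 h2 h3]] := ex_tr (erefl (n - cyc v)%N).
have hodd : odd (n - cyc v) = false.
  have : ~~ odd_perm v by rewrite -Alt_even.
  by rewrite [in odd_perm v]h3 odd_perm_prod // h1 => /negbTE.
have hsz : size ts = (n - cyc v)./2.*2.
  by rewrite h1 -[in LHS](odd_double_half (n - cyc v)) hodd.
have [s [s1 s2 s3]] := pairing hn1 hsz h2.
pose P k := [exists s : (k.-tuple {perm 'I_n}),
   all (fun t => t \in TAn n) s && (v == \prod_(t <- s) t)].
have PE k : P k <-> exists s : seq {perm 'I_n},
   [/\ size s = k, all (fun t => t \in TAn n) s & v = \prod_(t <- s) t].
  split.
    by move=> /existsP[t /andP[ha /eqP hb]]; exists t; rewrite size_tuple.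
  move=> [t [ht ha hb]]; apply/existsP; exists (tcast ht (in_tuple t)).
  by rewrite val_tcast /= ha hb eqxx.
have exP : exists k, P k.
  by exists (size s); apply/PE; exists s; rewrite -s3 -h3.
case: (ex_minnP exP) => k /PE Pk kmin.
exists k; split.
  split => // t ha hb; apply: kmin; apply/PE; exists t; done.
have km : (k <= n - cyc v)%N.
  by rewrite -h1 -s1; apply: kmin; apply/PE; exists s; rewrite -s3 -h3.
case: Pk => t [ht ha hb].
have := lower (leqnn (size t)) ha; rewrite -hb ht => hl.
have := cyc_le v => hc.
have := odd_double_half (n - cyc v); rewrite hodd add0n => hm.
have := odd_double_half k.
case: (odd k) hl => /= hl hk; rewrite -!muln2 in hm hk; lia.
Qed.
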